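(* Fix a variable $x$ and let $\chi$ be any formula generated by $\chi ::= p_x \mid \mathsf{K}_x\alpha \mid \neg\chi \mid (\chi\wedge\chi)$, where $p\in\mathbf{P}$ and $\alpha$ ranges over sentences. Then for every sentence $\beta$, $\mathsf{K}_\chi\beta\to\mathsf{K}_\chi\mathsf{K}_\chi\beta$ is a theorem of $\mathbf{LEL}$.
   Context: Fix a nonempty finite set $\mathbf{A}$ of agents, a countable set $\mathbf{X}$ of variables disjoint from $\mathbf{A}$, and a countable set $\mathbf{P}$ of predicate letters. Formulas and free variables: $\phi ::= p_x \mid \top \mid \neg\phi \mid (\phi\wedge\phi) \mid [x:=a]\phi \mid \mathsf{K}_X\alpha$ ($p\in\mathbf{P}$, $x\in\mathbf{X}$, $a\in\mathbf{A}$, $X\subseteq\mathbf{X}$ finite possibly empty, $\alpha$ with no free variables), $FV(p_x)=\{x\}$, $FV(\top)=\emptyset$, $FV(\neg\phi)=FV(\phi)$, $FV(\phi\wedge\psi)=FV(\phi)\cup FV(\psi)$, $FV([x:=a]\phi)=FV(\phi)\setminus\{x\}$, $FV(\mathsf{K}_X\alpha)=X$. Sentences have no free variables. $\bot:=\neg\top$, $\langle x:=a\rangle\phi:=\neg[x:=a]\neg\phi$. $\phi[y/x]$ replaces free occurrences of $x$ by $y$ (including in index sets of $\mathsf{K}_X$); admissible if $x$ has no free occurrence within the scope of any $[y:=b]$. $[\vec{x}:=\vec{a}]\phi$ abbreviates $[x_1:=a_1]\cdots[x_n:=a_n]\phi$ for equal-length strings $\vec x,\vec a$, $\mathsf{K}_{\vec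 x}:=\mathsf{K}_{\{x_1,\dots,x_n\}}$, $\mathsf{K}_x:=\mathsf{K}_{\{x\}}$, $\{\vec a\}=\{a_1,\dots,a_n\}$. $\mathbf{LEL}$: axioms — propositional tautologies; $\mathsf{K}_X(\alpha\to\beta)\to(\mathsf{K}_X\alpha\to\mathsf{K}_X\beta)$; $\mathsf{K}_X\alpha\to\mathsf{K}_Y\alpha$ ($X\subseteq Y$); $[x:=a](\phi\to\psi)\to([x:=a]\phi\to[x:=a]\psi)$; $\langle x:=a\rangle\phi\to[x:=a]\phi$; $\phi\to[x:=a]\phi$ ($x\notin FV(\phi)$); $[y:=a]([x:=a]\phi\to\phi[y/x])$ ($\phi[y/x]$ admissible); $[x:=a][y:=b]\phi\to[y:=b][x:=a]\phi$ ($x\neq y$); $\bigwedge_{a\in\mathbf{A}}[x:=a]\phi\to\phi$; $\mathsf{K}_X\alpha\to\alpha$; $[\vec{x}:=\vec{a}](\neg\mathsf{K}_{\vec{x}}\alpha\to\mathsf{K}_{\vec{x}}[\vec{x}:=\vec{a}]\neg\mathsf{K}_{\vec{x}}\alpha)$; $[x:=a]\mathsf{K}_{x}\langle x:=a\rangle\top$; $[x:=a](p_x\to\mathsf{K}_{x}[x:=a]p_x)$; $[\vec{x}:=\vec{a}](\bigwedge_{b\in B}[x:=b]\bot\to\mathsf{K}_{\vec{x}}\bigwedge_{b\in B}[x:=b]\bot)$ with $B=\mathbf{A}\setminus\{\vec a\}$. Rules: modus ponens; from sentence $\alpha$ infer $\mathsf{K}_\emptyset\alpha$; from $\phi$ infer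 $[x:=a]\phi$. Intensional distributed knowledge: for a formula $\phi$ with free variables among $\{x\}$ and $A\subseteq\mathbf{A}$, let $\phi!(A):=\bigwedge_{a\in A}\langle x:=a\rangle\phi\wedge\bigwedge_{b\in\mathbf{A}\setminus A}[x:=b]\neg\phi$. For a sentence $\alpha$, $\mathsf{K}_\phi\alpha:=\bigwedge_{\{\vec a\}\subseteq\mathbf{A}}(\phi!(\{\vec a\})\to[\vec{x}:=\vec{a}]\mathsf{K}_{\vec{x}}\alpha)$, where the conjunction ranges over all subsets of $\mathbf{A}$, each listed as a string $\vec a$ of distinct agents and paired with a string $\vec x$ of distinct variables of the same length. *)

(* Defs.v *)
From HB Require Import structures.
From mathcomp Require Import all_boot.
From mathcomp Require Import finmap.

Set Implicit Arguments.
Unset Strict Implicit.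
Unset Printing Implicit Defensive.

Local Open Scope fset_scope.

(* Variables are natural numbers (a countably infinite set disjoint from the
   agents); agents form a finite type A; predicate letters a countable type P. *)
Section LEL.
Variables (A : finType) (P : countType).

Inductive form : Type :=
  | fPred : P -> nat -> form
  | fTop  : form
  | fNeg  : form -> form
  | fAnd  : form -> form -> form
  | fAsg  : nat -> A -> form -> form
  | fK    : {fset nat} -> form -> form.

Fixpoint FV (f : form) : {fset nat} :=
  match f with
  | fPred _ x => [fset x]
  | fTop => fset0
  | fNeg g => FV g
  | fAnd g h => FV g `|` FV h
  | fAsg x _ g => FV g `\ x
  | fK X _ => X
  end.

Definition sentence (f : form) : bool := FV f == fset0.

Fixpoint wf (f : form) : bool :=
  match f with
  | fPred _ _ | fTop => true
  | fNeg g => wf g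
  | fAnd g h => wf g && wf h
  | fAsg _ _ g => wf g
  | fK _ a => sentence a && wf a
  end.

Definition fBot : form := fNeg fTop.
Definition fImp (f g : form) : form := fNeg (fAnd f (fNeg g)).
Definition fDia (x : nat) (a : A) (f : form) : form := fNeg (fAsg x a (fNeg f)).

Fixpoint bigAnd (s : seq form) : form :=
  match s with
  | [::] => fTop
  | [:: f] => f
  | f :: s' => fAnd f (bigAnd s')
  end.

Fixpoint asgs (xs : seq nat) (as_ : seq A) (f : form) : form :=
  match xs, as_ with
  | x :: xs', a :: as' => fAsg x a (asgs xs' as' f)
  | _, _ => f
  end.

Definition fset_of (xs : seq nat) : {fset nat} := [fset y | y in xs].

Fixpoint subst (y x : nat) (f : form) : form :=
  match f with
  | fPred p z => fPred p (if z == x then y else z)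
  | fTop => fTop
  | fNeg g => fNeg (subst y x g)
  | fAnd g h => fAnd (subst y x g) (subst y x h)
  | fAsg z a g => if z == x then fAsg z a g else fAsg z a (subst y x g)
  | fK X a => fK (if x \in X then y |` (X `\ x) else X) a
  end.

Fixpoint admissible (y x : nat) (f : form) : bool :=
  match f with
  | fPred _ _ | fTop | fK _ _ => true
  | fNeg g => admissible y x g
  | fAnd g h => admissible y x g && admissible y x h
  | fAsg z _ g =>
      if z == x then true
      else if z == y then x \notin FV g
      else admissible y x g
  end.

(* Propositional tautologies: true under every valuation of the
   non-boolean (atomic, assignment, knowledge) subformulas. *)
Fixpoint peval (v : form -> bool) (f : form) : bool :=
  match f with
  | fTop => true
  | fNeg g => ~~ peval v g
  | fAnd g h => peval v g && peval v h
  | _ => v f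
  end.

Definition tautology (f : form) : Prop := forall v, peval v f.

Definition allA : seq A := enum A.

Inductive axiom : form -> Prop :=
  | AxTaut f : tautology f -> axiom f
  | AxKdist X a b : axiom (fImp (fK X (fImp a b)) (fImp (fK X a) (fK X b)))
  | AxKmono X Y a : X `<=` Y -> axiom (fImp (fK X a) (fK Y a))
  | AxAdist x a f g :
      axiom (fImp (fAsg x a (fImp f g)) (fImp (fAsg x a f) (fAsg x a g)))
  | AxAfunc x a f : axiom (fImp (fDia x a f) (fAsg x a f))
  | AxAvac x a f : x \notin FV f -> axiom (fImp f (fAsg x a f))
  | AxAsubst x y a f : admissible y x f ->
      axiom (fAsg y a (fImp (fAsg x a f) (subst y x f)))
  | AxAcomm x y a b f : x != y ->
      axiom (fImp (fAsg x a (fAsg y b f)) (fAsg y b (fAsg x a f)))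
  | AxAall x f : axiom (fImp (bigAnd [seq fAsg x a f | a <- allA]) f)
  | AxKT X a : axiom (fImp (fK X a) a)
  | AxNegIntro (xs : seq nat) (as_ : seq A) a : size xs = size as_ ->
      axiom (asgs xs as_ (fImp (fNeg (fK (fset_of xs) a))
               (fK (fset_of xs) (asgs xs as_ (fNeg (fK (fset_of xs) a))))))
  | AxKdom x a : axiom (fAsg x a (fK [fset x] (fDia x a fTop)))
  | AxKpred x a p :
      axiom (fAsg x a (fImp (fPred p x) (fK [fset x] (fAsg x a (fPred p x)))))
  | AxKemp (xs : seq nat) (as_ : seq A) x : size xs = size as_ ->
      let B := [seq b <- allA | b \notin as_] in
      let E := bigAnd [seq fAsg x b fBot | b <- B] in
      axiom (asgs xs as_ (fImp E (fK (fset_of xs) E))).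

Inductive LEL : form -> Prop :=
  | LAx f : axiom f -> wf f -> LEL f
  | LMP f g : LEL (fImp f g) -> LEL f -> LEL g
  | LNecK a : sentence a -> LEL a -> LEL (fK fset0 a)
  | LNecA x a f : LEL f -> LEL (fAsg x a f).

Definition bang (x : nat) (phi : form) (B : {set A}) : form :=
  fAnd (bigAnd [seq fDia x a phi | a <- enum B])
       (bigAnd [seq fAsg x b (fNeg phi) | b <- enum (~: B)]).

(* Intensional distributed knowledge K_phi alpha, given for each subset B of
   agents a listing lst B of its elements and a string vars B of variables. *)
Definition Kint (lst : {set A} -> seq A) (vars : {set A} -> seq nat)
    (x : nat) (phi alpha : form) : form :=
  bigAnd [seq fImp (bang x phi B)
                   (asgs (vars B) (lst B) (fK (fset_of (vars B)) alpha))
         | B <- enum {set A}].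

Inductive chi_form (x : nat) : form -> Prop :=
  | ChiP p : chi_form x (fPred p x)
  | ChiK a : sentence a -> wf a -> chi_form x (fK [fset x] a)
  | ChiNeg f : chi_form x f -> chi_form x (fNeg f)
  | ChiAnd f g : chi_form x f -> chi_form x g -> chi_form x (fAnd f g).

End LEL.

(* Main.v *)
Require Import Defs.
From mathcomp Require Import all_boot finmap.
Set Implicit Arguments.
Unset Strict Implicit.
Unset Printing Implicit Defensive.
Section Proof.
Local Open Scope fset_scope.
Variables (A : finType) (P : countType).
Notation form := (form A P).
Notation Top := (fTop A P).
Notation Bot := (@fBot A P).

Definition pre (t : seq (nat * A)) (f : form) : form :=
  foldr (fun p g => fAsg p.1 p.2 g) f t.

Lemma LEL_wf (f : form) : LEL f -> wf f.
Proof.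
elim=> //= {f}.
- move=> f g _ H _ _; move: H => /=.
  by case/andP.
- by move=> a -> _ ->.
Qed.

Lemma wf_imp (f g : form) : wf (fImp f g) = wf f && wf g.
Proof. by []. Qed.

Lemma wf_pre t (f : form) : wf (pre t f) = wf f.
Proof. by elim: t => //= p t ->. Qed.

Lemma mem_fset_of (xs : seq nat) z : (z \in fset_of xs) = (z \in xs).
Proof.
by apply/imfsetP/idP => [[w Hw ->] //| H]; exists z.
Qed.

Lemma FV_pre t (f : form) : FV (pre t f) = FV f `\` fset_of (unzip1 t).
Proof.
elim: t => [|[y a] t IH] /=; apply/fsetP=> z.
  by rewrite in_fsetD mem_fset_of.
rewrite IH !in_fsetD in_fset1 !mem_fset_of /= inE.
by case: (z == y); rewrite ?andbF ?andbT //= andbC.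
Qed.

Ltac taut := let v := fresh "v" in move=> v; rewrite ?/fImp ?/fDia ?/fBot /=;
  repeat match goal with
  | |- context [peval v ?f] => case: (peval v f)
  | |- context [v ?f] => case: (v f)
  end; done.

Lemma sent_imp (f g : form) : sentence (fImp f g) = sentence f && sentence g.
Proof. by rewrite /sentence /= fsetU_eq0. Qed.

Lemma sent_neg (f : form) : sentence (fNeg f) = sentence f.
Proof. by []. Qed.

Lemma sent_and (f g : form) : sentence (fAnd f g) = sentence f && sentence g.
Proof. by rewrite /sentence /= fsetU_eq0. Qed.

Arguments sentence : simpl never.
Ltac wfstep := rewrite ?wf_pre ?sent_imp ?sent_and ?sent_neg.
Ltac wfs := repeat match goal with H : context [wf (pre _ _)] |- _ => rewrite wf_pre in H end;
  try (simpl in * );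
  repeat match goal with H : is_true (_ && _) |- _ => case/andP: H => ? ? end;
  do 6 (simpl; wfstep);
  repeat (match goal with H : is_true _ |- _ => rewrite H end); rewrite /= ?andbT //.

Lemma mp (f g : form) : LEL (fImp f g) -> LEL f -> LEL g.
Proof. exact: LMP. Qed.
Arguments mp {f g}.

Lemma tautL (f : form) : tautology f -> wf f -> LEL f.
Proof. by move=> H W; apply: LAx => //; apply: AxTaut. Qed.

Lemma chain (f g h : form) : LEL (fImp f g) -> LEL (fImp g h) -> LEL (fImp f h).
Proof.
move=> H1 H2; have := LEL_wf H1; have := LEL_wf H2; rewrite /= => /andP[_ W3] /andP[W1 W2].
apply: mp H2; apply: mp H1; apply: tautL; first by taut.
wfs.
Qed.

Lemma boxNec t (f : form) : LEL f -> LEL (pre t f).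
Proof. by elim: t => //= p t IH H; apply: LNecA; apply: IH. Qed.

Lemma boxK t (f g : form) : wf f -> wf g ->
  LEL (fImp (pre t (fImp f g)) (fImp (pre t f) (pre t g))).
Proof.
move=> Wf Wg; elim: t => [|[y a] t IH] /=.
  by apply: tautL; [taut | rewrite /= Wf Wg].
have W1 := LEL_wf IH.
have H1 : LEL (fImp (fAsg y a (pre t (fImp f g))) (fAsg y a (fImp (pre t f) (pre t g)))).
  apply: mp (LNecA y a IH); apply: LAx; first exact: AxAdist.
  by rewrite /= !wf_pre /= Wf Wg.
have H2 : LEL (fImp (fAsg y a (fImp (pre t f) (pre t g)))
               (fImp (fAsg y a (pre t f)) (fAsg y a (pre t g)))).
  by apply: LAx; [exact: AxAdist | rewrite /= !wf_pre Wf Wg].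
exact: chain H1 H2.
Qed.

Lemma boxMP t (f g : form) : LEL (pre t (fImp f g)) -> LEL (pre t f) -> LEL (pre t g).
Proof.
move=> H1 H2; have := LEL_wf H1; rewrite wf_pre /= => /andP[Wf Wg].
by apply: mp H2; apply: mp H1; apply: boxK.
Qed.

Lemma box1 t (f1 g : form) : tautology (fImp f1 g) -> wf g ->
  LEL (pre t f1) -> LEL (pre t g).
Proof.
move=> T Wg H1; have W1 := LEL_wf H1; apply: boxMP H1; apply: boxNec; apply: tautL => //; wfs.
Qed.

Lemma box2 t (f1 f2 g : form) : tautology (fImp f1 (fImp f2 g)) -> wf g ->
  LEL (pre t f1) -> LEL (pre t f2) -> LEL (pre t g).
Proof.
move=> T Wg H1 H2; have W1 := LEL_wf H1; have W2 := LEL_wf H2; apply: boxMP H2; apply: boxMP H1; apply: boxNec; apply: tautL => //; wfs.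
Qed.

Lemma box3 t (f1 f2 f3 g : form) : tautology (fImp f1 (fImp f2 (fImp f3 g))) -> wf g ->
  LEL (pre t f1) -> LEL (pre t f2) -> LEL (pre t f3) -> LEL (pre t g).
Proof.
move=> T Wg H1 H2 H3; have W1 := LEL_wf H1; have W2 := LEL_wf H2; have W3 := LEL_wf H3.
apply: boxMP H3; apply: boxMP H2; apply: boxMP H1; apply: boxNec; apply: tautL => //.
wfs.
Qed.

Lemma box4 t (f1 f2 f3 f4 g : form) :
  tautology (fImp f1 (fImp f2 (fImp f3 (fImp f4 g)))) -> wf g ->
  LEL (pre t f1) -> LEL (pre t f2) -> LEL (pre t f3) -> LEL (pre t f4) -> LEL (pre t g).
Proof.
move=> T Wg H1 H2 H3 H4; have W1 := LEL_wf H1; have W2 := LEL_wf H2; have W3 := LEL_wf H3.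
have W4 := LEL_wf H4; apply: boxMP H4; apply: boxMP H3; apply: boxMP H2; apply: boxMP H1; apply: boxNec.
apply: tautL => //; wfs.
Qed.

Lemma boxImp t (f g : form) : LEL (fImp f g) -> LEL (fImp (pre t f) (pre t g)).
Proof.
move=> H; have := LEL_wf H; rewrite /= => /andP[Wf Wg].
by apply: (mp (boxK t Wf Wg)); apply: boxNec.
Qed.

Lemma boxImp2 t (f1 f2 g : form) : LEL (fImp f1 (fImp f2 g)) ->
  LEL (fImp (pre t f1) (fImp (pre t f2) (pre t g))).
Proof.
move=> H; have := LEL_wf H; rewrite /= => /andP[W1 /andP[W2 Wg]].
have H1 := boxImp t H.
have H2 := boxK t W2 Wg.
apply: (box2 (t := [::])) H1 H2 => //; first by taut.
by rewrite /= !wf_pre W1 W2 Wg.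
Qed.

Lemma KNec X (f : form) : sentence f -> LEL f -> LEL (fK X f).
Proof.
move=> S H; have W := LEL_wf H.
apply: (mp _ (LNecK S H)); apply: LAx; first exact: (AxKmono _ (fsub0set X)).
wfs.
Qed.

Lemma KImp X (f g : form) : sentence f -> sentence g -> LEL (fImp f g) ->
  LEL (fImp (fK X f) (fK X g)).
Proof.
move=> Sf Sg H; have := LEL_wf H; rewrite /= => /andP[Wf Wg].
apply: (mp _ (KNec X _ H)); last by rewrite sent_imp Sf Sg.
by apply: LAx; [exact: AxKdist | wfs].
Qed.

Lemma KImp2 X (f1 f2 g : form) : sentence f1 -> sentence f2 -> sentence g ->
  LEL (fImp f1 (fImp f2 g)) ->
  LEL (fImp (fK X f1) (fImp (fK X f2) (fK X g))).
Proof.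
move=> S1 S2 Sg H; have := LEL_wf H; rewrite /= => /andP[W1 /andP[W2 Wg]].
have H1 := KImp X S1 (etrans (sent_imp _ _) (introT andP (conj S2 Sg))) H.
have H2 : LEL (fImp (fK X (fImp f2 g)) (fImp (fK X f2) (fK X g))).
  by apply: LAx; [exact: AxKdist | wfs].
apply: (box2 (t := [::])) H1 H2 => //; first by taut.
wfs.
Qed.


Lemma Comm t w a (F : form) : w \notin unzip1 t -> wf F ->
  LEL (fImp (pre t (fAsg w a F)) (fAsg w a (pre t F))).
Proof.
move=> Hw WF; elim: t Hw => [|[y b] t IH] /=.
  by move=> _; apply: tautL; [taut | wfs].
rewrite inE negb_or => /andP[Hwy Hw].
apply: chain (boxImp [:: (y, b)] (IH Hw)) _.
apply: LAx; first by apply: AxAcomm; rewrite eq_sym.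
wfs.
Qed.

Lemma NecIn t w a (F : form) : uniq (unzip1 t) -> (w, a) \in t ->
  LEL (fAsg w a F) -> LEL (pre t F).
Proof.
elim: t => [|[y b] t IH] //= /andP[Hy Ut]; rewrite inE => /orP[/eqP [-> ->]|Hin] H.
  have WF : wf F by have := LEL_wf H.
  exact: (mp (Comm b Hy WF) (boxNec t H)).
by apply: LNecA; apply: IH.
Qed.

Lemma subst_id y (f : form) : subst y y f = f.
Proof.
elim: f => //=.
- by move=> p z; case: eqP => // ->.
- by move=> f ->.
- by move=> f -> g ->.
- by move=> z a f ->; case: eqP.
- by move=> X a; case: ifP => // H; rewrite fsetD1K.
Qed.

Lemma adm_id y (f : form) : admissible y y f.
Proof.
elim: f => //=.
- by move=> f -> g ->.
- by move=> z a f ->; case: eqP.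
Qed.

Lemma Sub1 y a (th : form) : wf th -> LEL (fAsg y a (fImp (fAsg y a th) th)).
Proof.
move=> W; have := @AxAsubst A P y y a th (adm_id y th).
rewrite subst_id => Ax; apply: LAx => //; wfs.
Qed.

Lemma Sub2 y a (th : form) : wf th -> LEL (fAsg y a (fImp th (fAsg y a th))).
Proof.
move=> W; have H1 := Sub1 y a (th := fNeg th) W.
have H2 : LEL (fAsg y a (fImp (fDia y a th) (fAsg y a th))).
  by apply: LNecA; apply: LAx; [exact: AxAfunc | wfs].
apply: (box2 (t := [:: (y, a)])) H1 H2; [taut | wfs].
Qed.

Lemma SubA t r (th : form) : uniq (unzip1 t) -> {subset r <= t} -> wf th ->
  LEL (pre t (fImp (pre r th) th)).
Proof.
move=> Ut; elim: r => [|[y a] r IH] Hs W /=.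
  by apply: boxNec; apply: tautL; [taut | wfs].
have H1 : LEL (pre t (fImp (fAsg y a (pre r th)) (pre r th))).
  by apply: (NecIn (w := y) (a := a)) => //; [apply: Hs; rewrite inE eqxx
     | apply: Sub1; rewrite wf_pre].
have H2 := IH (fun p Hp => Hs p (@mem_behead _ ((y, a) :: r) p Hp)) W.
apply: box2 H1 H2; [taut | wfs].
Qed.

Lemma SubB t r (th : form) : uniq (unzip1 t) -> {subset r <= t} -> wf th ->
  LEL (pre t (fImp th (pre r th))).
Proof.
move=> Ut; elim: r => [|[y a] r IH] Hs W /=.
  by apply: boxNec; apply: tautL; [taut | wfs].
have H1 : LEL (pre t (fImp (pre r th) (fAsg y a (pre r th)))).
  by apply: (NecIn (w := y) (a := a)) => //; [apply: Hs; rewrite inE eqxx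
     | apply: Sub2; rewrite wf_pre].
have H2 := IH (fun p Hp => Hs p (@mem_behead _ ((y, a) :: r) p Hp)) W.
apply: box2 H2 H1; [taut | wfs].
Qed.


Lemma subst_pre w y s (F : form) : y \notin unzip1 s ->
  subst w y (pre s F) = pre s (subst w y F).
Proof.
elim: s => [|[z b] s IH] //=; rewrite inE negb_or => /andP[Hyz Hy].
by rewrite eq_sym (negbTE Hyz) IH.
Qed.

Lemma adm_pre w y s (F : form) : y \notin unzip1 s -> w \notin unzip1 s ->
  admissible w y (pre s F) = admissible w y F.
Proof.
elim: s => [|[z b] s IH] //=; rewrite !inE !negb_or => /andP[Hyz Hy] /andP[Hwz Hw].
by rewrite eq_sym (negbTE Hyz) eq_sym (negbTE Hwz) IH.
Qed.

Lemma sent_pre_closed s (F : form) : sentence F -> sentence (pre s F).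
Proof.
rewrite /sentence FV_pre => /eqP ->; apply/eqP; apply/fsetP => z.
by rewrite in_fsetD in_fset0 andbF.
Qed.

Lemma AvacPre u (F : form) : sentence F -> wf F -> LEL (fImp F (pre u F)).
Proof.
move=> S W; elim: u => [|[z b] u IH] /=.
  by apply: tautL; [taut | wfs].
apply: chain IH _; apply: LAx; last by wfs.
apply: AxAvac; have := sent_pre_closed u S; rewrite /sentence => /eqP ->.
by rewrite in_fset0.
Qed.

Lemma Ren t s ws (al : form) : uniq (unzip1 t) -> uniq (unzip1 s) -> size ws = size s ->
  {subset zip ws (unzip2 s) <= t} -> all (fun w => w \notin unzip1 s) ws ->
  sentence al -> wf al ->
  forall X, exists2 X', X' `<=` (X `\` fset_of (unzip1 s)) `|` fset_of ws &
    LEL (pre t (fImp (pre s (fK X al)) (fK X' al))).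
Proof.
move=> Ut; elim: s ws => [|[y a] s IH] [|w ws] //=.
  move=> _ _ _ _ Sa Wa X; exists X.
    by apply/fsubsetP => z Hz; rewrite in_fsetU in_fsetD Hz mem_fset_of.
  by apply: boxNec; apply: tautL; [taut | wfs].
move=> /andP[Hy Us] [Hsz] Hsub /andP[Hw Hws] Sa Wa X.
have Hwt : (w, a) \in t by apply: Hsub; rewrite inE eqxx.
move: Hw; rewrite inE negb_or => /andP[Hwy Hw].
set X1 := if y \in X then w |` (X `\ y) else X.
have Hws1 : all (fun w0 => w0 \notin unzip1 s) ws.
  by apply/allP => z Hz; move/allP: Hws => /(_ z Hz); rewrite inE negb_or => /andP[].
have [X' HX' H2] := IH ws Us Hsz (fun p Hp => Hsub p (@mem_behead _ ((w, a) :: zip ws (unzip2 s)) p Hp)) Hws1 Sa Wa X1.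
exists X'.
  apply/fsubsetP => z /(fsubsetP HX'); rewrite !in_fsetU !in_fsetD !mem_fset_of /= !inE.
  rewrite /X1; case: ifP => HyX.
    rewrite !inE.
    by case: (z == w); case: (z == y); case: (z \in unzip1 s); case: (z \in X); case: (z \in ws).
  case: eqP => [->|_]; first by rewrite HyX andbF /= => ->; rewrite !orbT.
  by case: (z == w); case: (z \in unzip1 s); case: (z \in X); case: (z \in ws).
have H1 : LEL (pre t (fImp (fAsg y a (pre s (fK X al))) (pre s (fK X1 al)))).
  apply: (NecIn (w := w) (a := a)) => //.
  have Ax := @AxAsubst A P y w a (pre s (fK X al)).
  rewrite adm_pre // subst_pre // in Ax.
  by apply: LAx; [exact: Ax | wfs].
apply: box2 H1 H2; [taut | wfs].
Qed.


Definition Dm t (al : form) : form := pre t (fK (fset_of (unzip1 t)) al).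

Lemma sent_preK s X (al : form) : X `<=` fset_of (unzip1 s) -> sentence (pre s (fK X al)).
Proof.
move=> HX; rewrite /sentence FV_pre /=; apply/eqP; apply/fsetP => z.
rewrite in_fsetD in_fset0; case Hz: (z \in X); last by rewrite andbF.
by rewrite (fsubsetP HX z Hz).
Qed.

Lemma sent_Dm t (al : form) : sentence (Dm t al).
Proof. exact: sent_preK. Qed.

Definition pick t (b : A) : nat := nth 0 (unzip1 t) (index b (unzip2 t)).

Lemma pickP t b : b \in unzip2 t -> (pick t b, b) \in t.
Proof.
move=> Hb; rewrite /pick.
have Hi : index b (unzip2 t) < size t by rewrite -(size_map snd t) index_mem.
have E1 : nth 0 (unzip1 t) (index b (unzip2 t)) = (nth (0, b) t (index b (unzip2 t))).1.
  by rewrite /unzip1 (nth_map (0, b)).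
have E2 : b = (nth (0, b) t (index b (unzip2 t))).2.
  by rewrite -(nth_map (0, b) b snd Hi) nth_index.
rewrite E1 [X in (_, X) \in _]E2 -surjective_pairing; exact: mem_nth.
Qed.

Lemma pick_in t b : b \in unzip2 t -> pick t b \in unzip1 t.
Proof.
move=> Hb; rewrite /pick; apply: mem_nth.
by rewrite size_map -(size_map snd t) index_mem.
Qed.

Lemma zip_map_sub (f : A -> nat) (l : seq A) (t : seq (nat * A)) :
  (forall b, b \in l -> (f b, b) \in t) -> {subset zip (map f l) l <= t}.
Proof.
elim: l => [|b l IH] H p //=; rewrite inE => /orP[/eqP ->|Hp].
  by apply: H; rewrite inE eqxx.
by apply: (IH _ p Hp) => c Hc; apply: H; rewrite inE Hc orbT.
Qed.

Lemma Mono s t X (al : form) : uniq (unzip1 s) -> uniq (unzip1 t) ->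
  X `<=` fset_of (unzip1 s) -> {subset unzip2 s <= unzip2 t} ->
  sentence al -> wf al -> LEL (fImp (pre s (fK X al)) (Dm t al)).
Proof.
move=> Us Ut HX Hst Sa Wa.
set m := (\max_(y <- unzip1 s ++ unzip1 t) y).+1.
set z := iota m (size s).
have Hfresh : forall e, e \in z -> (e \notin unzip1 s) && (e \notin unzip1 t).
  move=> e; rewrite mem_iota => /andP[He _].
  have Hn : forall y, y \in unzip1 s ++ unzip1 t -> y != e.
    move=> y Hy; rewrite neq_ltn; apply/orP; left.
    apply: leq_trans He; rewrite ltnS.
    exact: (@leq_bigmax_seq _ _ xpredT (fun y => y) y Hy).
  apply/andP; split; apply/negP => H; have := Hn e; rewrite mem_cat H ?orbT eqxx.
  - by move=> /(_ isT).
  - by move=> /(_ isT).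
set u := zip z (unzip2 s).
have Hzs : size z = size s by rewrite size_iota.
have U1 : unzip1 u = z by rewrite unzip1_zip // size_map Hzs.
have U2 : unzip2 u = unzip2 s by rewrite unzip2_zip // size_map Hzs.
have Uu : uniq (unzip1 u) by rewrite U1 iota_uniq.
set Psi := pre s (fK X al).
have SPsi : sentence Psi by exact: sent_preK.
have WPsi : wf Psi by wfs.
have St1 := AvacPre u SPsi WPsi.
have [X' HX' HR] := Ren (t := u) (s := s) (ws := z) Uu Us Hzs
   (fun p Hp => Hp)
   (introT allP (fun e He => (andP (Hfresh e He)).1)) Sa Wa X.
have HX'' : X' `<=` fset_of (unzip1 u).
  apply/fsubsetP => e /(fsubsetP HX'); rewrite in_fsetU in_fsetD U1.
  case He: (e \in X); last by rewrite andbF.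
  by rewrite (fsubsetP HX e He).
have HM : LEL (pre u (fImp (fK X' al) (fK (fset_of (unzip1 u)) al))).
  by apply: boxNec; apply: LAx; [exact: AxKmono | wfs].
have St2 : LEL (pre u (fImp Psi (fK (fset_of (unzip1 u)) al))).
  by apply: box2 HR HM; [taut | wfs].
have St3 : LEL (fImp Psi (Dm u al)).
  apply: chain St1 _; apply: (mp (boxK _ _ _)) St2; wfs.
set Phi := Dm u al.
have WPhi : wf Phi by rewrite /Phi /Dm; wfs.
have St4 := AvacPre t (sent_Dm u al) WPhi.
set ws := map (pick t) (unzip2 s).
have Hsz2 : size ws = size u by rewrite size_map size_zip Hzs size_map minnn.
have Hsub2 : {subset zip ws (unzip2 u) <= t}.
  rewrite U2; apply: zip_map_sub => b Hb; apply: pickP; exact: Hst.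
have Hall2 : all (fun w => w \notin unzip1 u) ws.
  apply/allP => w /mapP [b Hb ->]; rewrite U1; apply/negP => Hz.
  by have := Hfresh _ Hz; rewrite pick_in ?andbF //; apply: Hst.
have [X2 HX2 HR2] := Ren (t := t) (s := u) (ws := ws) Ut Uu Hsz2 Hsub2 Hall2 Sa Wa
   (fset_of (unzip1 u)).
have HX2' : X2 `<=` fset_of (unzip1 t).
  apply/fsubsetP => e /(fsubsetP HX2); rewrite in_fsetU in_fsetD.
  case: (e \in fset_of (unzip1 u)); rewrite /= mem_fset_of => /mapP [b Hb ->]; rewrite mem_fset_of; apply: pick_in; exact: Hst.
have HM2 : LEL (pre t (fImp (fK X2 al) (fK (fset_of (unzip1 t)) al))).
  by apply: boxNec; apply: LAx; [exact: AxKmono | wfs].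
have St5 : LEL (pre t (fImp Phi (fK (fset_of (unzip1 t)) al))).
  by apply: box2 HR2 HM2; [taut | wfs].
have St6 : LEL (fImp (pre t Phi) (Dm t al)).
  apply: (mp (boxK _ _ _)) St5; wfs.
exact: chain St3 (chain St4 St6).
Qed.


Lemma sent_pre_sub t (F : form) : FV F `<=` fset_of (unzip1 t) -> sentence (pre t F).
Proof.
move=> HX; rewrite /sentence FV_pre; apply/eqP; apply/fsetP => z.
rewrite in_fsetD in_fset0; case Hz: (z \in FV F); last by rewrite andbF.
by rewrite (fsubsetP HX z Hz).
Qed.

Lemma sent_top : sentence Top.
Proof. by rewrite /sentence. Qed.

Lemma sent_asg y a (f : form) : sentence f -> sentence (fAsg y a f).
Proof. exact: (sent_pre_closed [:: (y, a)]). Qed.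

Lemma sent_dia y a (f : form) : sentence f -> sentence (fDia y a f).
Proof. by move=> H; rewrite /fDia sent_neg; apply: sent_asg; rewrite sent_neg. Qed.

Lemma asgs_pre xs as_ (f : form) : size xs = size as_ -> asgs xs as_ f = pre (zip xs as_) f.
Proof.
elim: xs as_ => [|x xs IH] [|b bs] //= [H]; by rewrite IH.
Qed.

Lemma Five t (ph : form) : sentence ph -> wf ph ->
  LEL (pre t (fImp (fNeg (fK (fset_of (unzip1 t)) ph))
        (fK (fset_of (unzip1 t)) (pre t (fNeg (fK (fset_of (unzip1 t)) ph)))))).
Proof.
move=> S W.
have Hsz : size (unzip1 t) = size (unzip2 t) by rewrite !size_map.
have Ax := @AxNegIntro A P (unzip1 t) (unzip2 t) ph Hsz.
rewrite !asgs_pre // zip_unzip in Ax.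
apply: LAx => //; wfs.
apply: sent_pre_sub; exact: fsubset_refl.

Qed.

Lemma E_lem t : uniq (unzip1 t) ->
  LEL (pre t (fK (fset_of (unzip1 t)) (fNeg (pre t Bot)))).
Proof.
move=> Ut.
suff H : forall r, {subset r <= t} ->
  LEL (pre t (fK (fset_of (unzip1 t)) (fNeg (pre r Bot)))) by apply: H.
elim=> [|[y a] r IH] Hs /=.
  apply: boxNec; apply: KNec; first by rewrite /sentence.
  by apply: tautL; [taut | wfs].
have Hyt : (y, a) \in t by apply: Hs; rewrite inE eqxx.
have IH' := IH (fun p Hp => Hs p (@mem_behead _ ((y, a) :: r) p Hp)).
have Sr : sentence (pre r Bot) by apply: sent_pre_closed; rewrite /sentence.
have SD : sentence (fDia y a Top) by apply: sent_dia; exact: sent_top.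
have SD' : sentence (fAsg y a (fNeg Top)) by apply: sent_asg; exact: sent_top.
have HD : LEL (pre t (fK (fset_of (unzip1 t)) (fDia y a Top))).
  have H1 : LEL (pre t (fK [fset y] (fDia y a Top))).
    by apply: (NecIn (w := y) (a := a)) => //; apply: LAx; [exact: AxKdom | wfs].
  have H2 : LEL (pre t (fImp (fK [fset y] (fDia y a Top)) (fK (fset_of (unzip1 t)) (fDia y a Top)))).
    apply: boxNec; apply: LAx; last by wfs.
    apply: AxKmono; apply/fsubsetP => e; rewrite in_fset1 mem_fset_of => /eqP ->.
    by apply/mapP; exists (y, a).
  by apply: box2 H1 H2; [taut | wfs].
have F1 : LEL (fImp (fNeg (pre r Bot)) (fAsg y a (fNeg (pre r Bot)))).
  apply: (AvacPre [:: (y, a)] (Sr : sentence (fNeg (pre r Bot)))); wfs.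
have F2 : LEL (fImp (fAsg y a (fNeg (pre r Bot))) (fImp (fAsg y a (pre r Bot)) (fAsg y a Bot))).
  apply: (boxImp2 [:: (y, a)]); apply: tautL; [taut | wfs].
have T0 : LEL (fImp (fNeg (pre r Bot)) (fImp (fDia y a Top) (fNeg (fAsg y a (pre r Bot))))).
  by apply: (box2 (t := [::])) F1 F2; [taut | wfs].
have Sg : sentence (fNeg (fAsg y a (pre r Bot))) by rewrite sent_neg; apply: sent_asg.
have T1 := KImp2 (fset_of (unzip1 t)) (Sr : sentence (fNeg (pre r Bot))) SD Sg T0.
by apply: box3 IH' HD (boxNec t T1); [taut | wfs].
Qed.


Lemma L4in t (ph : form) : uniq (unzip1 t) -> sentence ph -> wf ph ->
  LEL (pre t (fImp (fK (fset_of (unzip1 t)) ph)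
                   (fK (fset_of (unzip1 t)) (Dm t ph)))).
Proof.
move=> Ut S W.
set Y := fset_of (unzip1 t).
set K := fun f : form => fK Y f.
set rho := Dm t ph.
have Srho : sentence rho := sent_Dm t ph.
have Wrho : wf rho by rewrite /rho /Dm; wfs.
have SN : sentence (fNeg (pre t Bot)) by rewrite sent_neg; apply: sent_pre_closed; rewrite /sentence.
have SPN : sentence (pre t (fNeg (fK Y ph))) by apply: sent_pre_sub; exact: fsubset_refl.
have Ha := E_lem Ut.
have Hb := Five t S W.
have c0 : LEL (fImp (pre t (fK Y ph)) (fImp (pre t (fNeg (fK Y ph))) (pre t Bot))).
  by apply: boxImp2; apply: tautL; [taut | wfs].
have c1 : LEL (fImp (fNeg (pre t Bot)) (fImp (pre t (fNeg (fK Y ph))) (fNeg rho))).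
  by apply: (box1 (t := [::])) c0; [taut | wfs].
have c2 := KImp2 Y SN SPN (Srho : sentence (fNeg rho)) c1.
have d : LEL (pre t (fImp (fNeg (fK Y ph)) (fK Y (fNeg rho)))).
  by apply: box3 Ha Hb (boxNec t c2); [taut | wfs].
have e := Five t (Srho : sentence (fNeg rho)) (Wrho : wf (fNeg rho)).
have f1 : LEL (pre t (fImp (fK Y (fNeg rho)) (fNeg rho))).
  by apply: boxNec; apply: LAx; [exact: AxKT | wfs].
have f2 : LEL (pre t (fImp (fK Y ph) rho)) by apply: SubB => //; wfs.
have g0 : LEL (pre t (fImp (fNeg (fK Y (fNeg rho))) (fK Y ph))).
  by apply: box1 d; [taut | wfs].
have g1 : LEL (fImp (pre t (fNeg (fK Y (fNeg rho)))) rho).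
  by apply: (mp (boxK _ _ _)) g0; wfs.
have SM : sentence (pre t (fNeg (fK Y (fNeg rho)))) by apply: sent_pre_sub; exact: fsubset_refl.
have g2 := boxNec t (KImp Y SM Srho g1).
by apply: box4 f2 f1 e g2; [taut | wfs].
Qed.

Lemma L4 t (ph : form) : uniq (unzip1 t) -> sentence ph -> wf ph ->
  LEL (fImp (Dm t ph) (Dm t (Dm t ph))).
Proof.
move=> Ut S W; apply: (mp (boxK _ _ _)) (L4in Ut S W); rewrite /Dm; wfs.
exact: sent_Dm.
Qed.


Lemma fset_of1 x : fset_of [:: x] = [fset x].
Proof. by apply/fsetP => z; rewrite mem_fset_of !inE. Qed.

Lemma chi_FV x (ch : form) : chi_form x ch -> (FV ch `<=` [fset x]) && wf ch.
Proof.
elim=> //= {ch}.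
- by move=> p; rewrite fsubset_refl.
- by move=> al -> ->; rewrite fsubset_refl.
- by move=> f g _ /andP[H1 W1] _ /andP[H2 W2]; rewrite fsubUset H1 H2 W1 W2.
Qed.

Lemma sent_chi x a (ch : form) : FV ch `<=` [fset x] -> sentence (pre [:: (x, a)] ch).
Proof. by move=> H; apply: sent_pre_sub; rewrite /= fset_of1. Qed.

Lemma ChiIntro x a (ch : form) : chi_form x ch ->
  LEL (pre [:: (x, a)] (fImp ch (fK (fset_of [:: x]) (pre [:: (x, a)] ch)))) /\
  LEL (pre [:: (x, a)] (fImp (fNeg ch) (fK (fset_of [:: x]) (pre [:: (x, a)] (fNeg ch))))).
Proof.
set t := [:: (x, a)].
have Ut : uniq (unzip1 t) by [].
set Y := fset_of [:: x].
elim=> {ch}.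
- move=> p.
  have Sp : sentence (pre t (fPred A p x)) by apply: sent_chi; rewrite fsubset_refl.
  have A1 : LEL (pre t (fImp (fPred A p x) (fK Y (pre t (fPred A p x))))).
    rewrite /Y fset_of1; apply: LAx; [exact: AxKpred | wfs].
  split=> //.
  have A2 : LEL (pre t (fImp (fK Y (pre t (fPred A p x))) (pre t (fPred A p x)))).
    by apply: boxNec; apply: LAx; [exact: AxKT | wfs].
  have A3 : LEL (pre t (fImp (pre t (fPred A p x)) (fPred A p x))) by apply: SubA.
  have N1 : LEL (pre t (fImp (fNeg (fPred A p x)) (fNeg (fK Y (pre t (fPred A p x)))))).
    by apply: box2 A2 A3; [taut | wfs].
  have A4 := Five t Sp (erefl true).
  have A5a : LEL (pre t (fImp (fNeg (fK Y (pre t (fPred A p x)))) (fNeg (fPred A p x)))).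
    by apply: box1 A1; [taut | wfs].
  have A5b : LEL (fImp (pre t (fNeg (fK Y (pre t (fPred A p x))))) (pre t (fNeg (fPred A p x)))).
    by apply: (mp (boxK _ _ _)) A5a; wfs.
  have S1 : sentence (pre t (fNeg (fK Y (pre t (fPred A p x))))).
    by apply: sent_pre_sub; exact: fsubset_refl.
  have S2 : sentence (pre t (fNeg (fPred A p x))) by apply: sent_chi; rewrite fsubset_refl.
  have A5 := boxNec t (KImp Y S1 S2 A5b).
  by apply: box3 N1 A4 A5; [taut | wfs].
- move=> al Sa Wa; rewrite -fset_of1; split.
    exact: L4in.
  exact: Five.
- move=> f Hf [IHp IHn]; split=> //.
  have Wf : wf f by have := (andP (chi_FV Hf)).2.
  have Sf : sentence (pre t f) by apply: sent_chi; exact: (andP (chi_FV Hf)).1.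
  have Sf' : sentence (pre t (fNeg (fNeg f))) by apply: sent_chi; exact: (andP (chi_FV Hf)).1.
  have H1 : LEL (fImp (pre t f) (pre t (fNeg (fNeg f)))).
    by apply: boxImp; apply: tautL; [taut | wfs].
  by apply: box2 IHp (boxNec t (KImp Y Sf Sf' H1)); [taut | wfs].
- move=> f g Hf [IHfp IHfn] Hg [IHgp IHgn].
  have Wf : wf f by have := (andP (chi_FV Hf)).2.
  have Wg : wf g by have := (andP (chi_FV Hg)).2.
  have Ff := (andP (chi_FV Hf)).1.
  have Fg := (andP (chi_FV Hg)).1.
  have Ffg : FV (fAnd f g) `<=` [fset x] by rewrite /= fsubUset Ff Fg.
  have Sf : sentence (pre t f) by apply: sent_chi.
  have Sg : sentence (pre t g) by apply: sent_chi.
  have Sfg : sentence (pre t (fAnd f g)) by apply: sent_chi.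
  have Snf : sentence (pre t (fNeg f)) by apply: sent_chi.
  have Sng : sentence (pre t (fNeg g)) by apply: sent_chi.
  have Snfg : sentence (pre t (fNeg (fAnd f g))) by apply: sent_chi.
  split.
    have H1 : LEL (fImp (pre t f) (fImp (pre t g) (pre t (fAnd f g)))).
      by apply: boxImp2; apply: tautL; [taut | wfs].
    have H2 := boxNec t (KImp2 Y Sf Sg Sfg H1).
    by apply: box3 IHfp IHgp H2; [taut | wfs].
  have H1 : LEL (fImp (pre t (fNeg f)) (pre t (fNeg (fAnd f g)))).
    by apply: boxImp; apply: tautL; [taut | wfs].
  have H2 : LEL (fImp (pre t (fNeg g)) (pre t (fNeg (fAnd f g)))).
    by apply: boxImp; apply: tautL; [taut | wfs].
  have K1 := boxNec t (KImp Y Snf Snfg H1).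
  have K2 := boxNec t (KImp Y Sng Snfg H2).
  by apply: box4 IHfn IHgn K1 K2; [taut | wfs].
Qed.


Lemma ChiConv x a (ch : form) t : chi_form x ch -> uniq (unzip1 t) -> a \in unzip2 t ->
  LEL (fImp (fDia x a ch) (Dm t (fDia x a ch))).
Proof.
move=> Hc Ut Ha.
have Wc : wf ch by have := (andP (chi_FV Hc)).2.
have Fc := (andP (chi_FV Hc)).1.
set s := [:: (x, a)].
set Y := fset_of [:: x].
have Sc : sentence (pre s ch) by apply: sent_chi.
have Sd : sentence (fDia x a ch).
  by rewrite /fDia sent_neg; apply: (@sent_chi x a (fNeg ch)).
have SdT : sentence (fDia x a Top) by apply: sent_dia; exact: sent_top.
have C1 : LEL (fImp (fDia x a ch) (pre s ch)) by apply: LAx; [exact: AxAfunc | wfs].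
have C2 : LEL (fImp (pre s ch) (pre s (fK Y (pre s ch)))).
  by apply: (mp (boxK _ _ _)) (ChiIntro a Hc).1; wfs.
have C3 : LEL (pre s (fK Y (fDia x a Top))).
  by rewrite /Y fset_of1; apply: LAx; [exact: AxKdom | wfs].
have c0 : LEL (fImp (pre s ch) (fImp (pre s (fNeg ch)) (pre s Bot))).
  by apply: boxImp2; apply: tautL; [taut | wfs].
have c1 : LEL (fImp (pre s ch) (fImp (fDia x a Top) (fDia x a ch))).
  by apply: (box1 (t := [::])) c0; [taut | wfs].
have C4 := boxNec s (KImp2 Y Sc SdT Sd c1).
have C5 : LEL (pre s (fImp (fK Y (pre s ch)) (fK Y (fDia x a ch)))).
  by apply: box2 C3 C4; [taut | wfs].
have C6 : LEL (fImp (pre s (fK Y (pre s ch))) (pre s (fK Y (fDia x a ch)))).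
  by apply: (mp (boxK _ _ _)) C5; wfs.
have Hsub : {subset unzip2 s <= unzip2 t}.
  by move=> b; rewrite inE => /eqP ->.
have Wd : wf (fDia x a ch) by wfs.
have M := @Mono s t Y (fDia x a ch) (erefl true) Ut (fsubset_refl _) Hsub Sd Wd.
exact: chain C1 (chain C2 (chain C6 M)).
Qed.


Lemma peval_bigAnd v (L : seq form) : peval v (bigAnd L) = all (peval v) L.
Proof.
elim: L => [|f L IH] //=; case: L IH => [|g L] IH /=; first by rewrite andbT.
by rewrite IH.
Qed.

Lemma wf_bigAnd (L : seq form) : wf (bigAnd L) = all (@wf A P) L.
Proof.
elim: L => [|f L IH] //=; case: L IH => [|g L] IH /=; first by rewrite andbT.
by move: IH => /= ->.
Qed.

Lemma sent_bigAnd (L : seq form) : all (@sentence A P) L -> sentence (bigAnd L).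
Proof.
elim: L => [|f L IH] /=; first by rewrite /sentence.
case: L IH => [|g L] IH /=; first by rewrite andbT.
by move=> /andP[Sf SL]; rewrite sent_and Sf IH.
Qed.

Fixpoint inL (l : form) (L : seq form) : Prop :=
  match L with [::] => False | f :: L' => f = l \/ inL l L' end.

Lemma all_In (p : form -> bool) (L : seq form) l : all p L -> inL l L -> p l.
Proof.
elim: L => [|f L IH] //= /andP[Hf HL] [<-|H] //; exact: IH.
Qed.

Lemma bigAnd_elim (L : seq form) l : inL l L -> wf (bigAnd L) -> LEL (fImp (bigAnd L) l).
Proof.
move=> Hl W; apply: tautL.
  move=> v; rewrite /fImp /= peval_bigAnd.
  by case E: (all _ _) => //=; rewrite (all_In E Hl).
rewrite /= W /=; move: W; rewrite wf_bigAnd => W.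
by rewrite (all_In W Hl).
Qed.

Lemma bigAnd_intro (H : form) (L : seq form) : wf H -> (forall l, inL l L -> LEL (fImp H l)) ->
  LEL (fImp H (bigAnd L)).
Proof.
move=> WH; elim: L => [|f L IH] Hs /=.
  by apply: tautL; [taut | wfs].
have Hf := Hs f (or_introl erefl).
have IH' := IH (fun l Hl => Hs l (or_intror Hl)).
case: L IH' {IH Hs} => [|g L] IH' //.
have W1 := LEL_wf Hf; have W2 := LEL_wf IH'.
by apply: (box2 (t := [::])) Hf IH'; [taut | wfs].
Qed.

Lemma DImp t (f g : form) : sentence f -> sentence g -> LEL (fImp f g) ->
  LEL (fImp (Dm t f) (Dm t g)).
Proof. by move=> Sf Sg H; apply: boxImp; apply: KImp. Qed.

Lemma D_bigAnd t (H : form) (L : seq form) : wf H -> all (@sentence A P) L ->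
  (forall l, inL l L -> LEL (fImp H (Dm t l))) ->
  LEL (fImp H (Dm t (bigAnd L))).
Proof.
move=> WH; elim: L => [|f L IH] SL Hs /=.
  have T : LEL (Dm t Top).
    by apply: boxNec; apply: KNec; [rewrite /sentence | apply: tautL; [taut | wfs]].
  have WT := LEL_wf T.
  by apply: (box1 (t := [::])) T; [taut | wfs].
move: SL => /andP [Sf SL].
have Hf := Hs f (or_introl erefl).
have IH' := IH SL (fun l Hl => Hs l (or_intror Hl)).
case: L IH' SL {IH Hs} => [|g L] IH' SL //.
have SL' : sentence (bigAnd (g :: L)) by exact: sent_bigAnd.
have Sfg : sentence (fAnd f (bigAnd (g :: L))) by rewrite sent_and Sf SL'.
have Wf : wf f by move: (LEL_wf Hf); rewrite /= /Dm wf_pre /= => /andP[_ /andP[_ ->]].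
have WL : wf (bigAnd (g :: L)).
  by move: (LEL_wf IH'); rewrite /= /Dm wf_pre /= => /andP[_ /andP[_ ->]].
have T0 : LEL (fImp f (fImp (bigAnd (g :: L)) (fAnd f (bigAnd (g :: L))))).
  by apply: tautL; [taut | wfs].
have K := boxImp2 t (KImp2 (fset_of (unzip1 t)) Sf SL' Sfg T0).
by apply: (box3 (t := [::])) Hf IH' K; [taut | wfs].
Qed.


Lemma map_inL (T : eqType) (f : T -> form) (s : seq T) b : b \in s -> inL (f b) (map f s).
Proof.
elim: s => [|c s IH] //=; rewrite inE => /orP[/eqP ->|H]; [by left | right; exact: IH].
Qed.

Lemma inL_map (T : Type) (f : T -> form) (s : seq T) l : inL l (map f s) ->
  exists b, l = f b.
Proof.
elim: s => [|c s IH] //= [<-|H]; first by exists c.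
exact: IH.
Qed.

Definition bangL x (chi : form) (B : {set A}) : form := locked (bang x chi B).

Lemma main (a0 : A) (lst : {set A} -> seq A) (vars : {set A} -> seq nat)
    (Hlst : forall B : {set A}, uniq (lst B) /\ [set a in lst B] = B)
    (Hvars : forall B : {set A}, uniq (vars B) /\ size (vars B) = size (lst B))
    (x : nat) (chi beta : form) :
  chi_form x chi -> sentence beta -> wf beta ->
  LEL (fImp (Kint lst vars x chi beta)
            (Kint lst vars x chi (Kint lst vars x chi beta))).
Proof.
move=> Hc Sb Wb.
set tB := fun B => zip (vars B) (lst B).
set KI := fun al => bigAnd [seq fImp (bangL x chi B) (Dm (tB B) al) | B <- enum {set A}].
have KintE : forall al, Kint lst vars x chi al = KI al.
  move=> al; rewrite /Kint /KI; congr bigAnd; apply: eq_map => B; rewrite /bangL -lock.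
  by rewrite asgs_pre ?(Hvars B).2 // /Dm unzip1_zip // (Hvars B).2.
have Ut : forall B, uniq (unzip1 (tB B)).
  by move=> B; rewrite /tB unzip1_zip ?(Hvars B).2 //; exact: (Hvars B).1.
have U2 : forall B, unzip2 (tB B) = lst B.
  by move=> B; rewrite /tB unzip2_zip ?(Hvars B).2.
have memB : forall B a, (a \in lst B) = (a \in B).
  by move=> B a; rewrite -{2}(Hlst B).2 inE.
have Wc : wf chi by have := (andP (chi_FV Hc)).2.
have Fc := (andP (chi_FV Hc)).1.
have Sdia : forall a, sentence (fDia x a chi).
  by move=> a; rewrite /fDia sent_neg; apply: (@sent_chi x a (fNeg chi)).
have Sasg : forall b, sentence (fAsg x b (fNeg chi)).
  by move=> b; apply: (@sent_chi x b (fNeg chi)).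
have Sbang : forall B, sentence (bangL x chi B).
  move=> B; rewrite /bangL -lock /bang sent_and; apply/andP; split; apply: sent_bigAnd;
  by rewrite all_map; apply/allP => b _ /=.
have Wbang : forall B, wf (bangL x chi B).
  move=> B; rewrite /bangL -lock /bang /= !wf_bigAnd; apply/andP; split; rewrite all_map;
  by apply/allP => b _ /=; rewrite Wc.
have SKI : forall al, sentence al -> sentence (KI al).
  move=> al Sa; apply: sent_bigAnd; rewrite all_map; apply/allP => B _ /=.
  by rewrite sent_imp Sbang sent_Dm.
have WKI : forall al, sentence al -> wf al -> wf (KI al).
  move=> al Sa Wa; rewrite wf_bigAnd all_map; apply/allP => B _.
  have WD : wf (Dm (tB B) al) by rewrite /Dm wf_pre /= Sa Wa.
  by apply/andP; split; [exact: Wbang | exact: WD].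
rewrite !KintE.
have SKb := SKI _ Sb.
have WKb := WKI _ Sb Wb.
apply: bigAnd_intro => // l /inL_map [B ->].
have E1 : LEL (fImp (KI beta) (fImp (bangL x chi B) (Dm (tB B) beta))).
  apply: bigAnd_elim => //; apply: (map_inL (fun B => fImp (bangL x chi B) (Dm (tB B) beta))).
  by rewrite mem_enum.
have SDb : forall B, sentence (Dm (tB B) beta) by move=> B'; exact: sent_Dm.
have WDb : forall B, wf (Dm (tB B) beta) by move=> B'; rewrite /Dm wf_pre /= Sb Wb.
have K1 : LEL (fImp (fAnd (bangL x chi B) (Dm (tB B) beta)) (Dm (tB B) (KI beta))).
  apply: D_bigAnd.
  - by apply/andP; split; [exact: Wbang | exact: WDb].
  - rewrite all_map; apply/allP => B' _ /=; by rewrite sent_imp Sbang sent_Dm.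
  move=> l' /inL_map [B' ->].
  have Sl' : sentence (fImp (bangL x chi B') (Dm (tB B') beta)) by rewrite sent_imp Sbang SDb.
  have WB := Wbang B; have WB' := Wbang B'; have WD := WDb B; have WD' := WDb B'.
  have SB := Sbang B; have SB' := Sbang B'; have SDB := SDb B; have SDB' := SDb B'.
  case: (boolP (B \subset B')) => HBB.
  + have H4 := L4 (Ut B) Sb Wb.
    have Hsub : {subset unzip2 (tB B) <= unzip2 (tB B')}.
      by move=> a; rewrite !U2 !memB; exact: (subsetP HBB).
    have M := @Mono (tB B) (tB B') _ beta (Ut B) (Ut B') (fsubset_refl _) Hsub Sb Wb.
    have M2 : LEL (fImp (Dm (tB B) beta) (fImp (bangL x chi B') (Dm (tB B') beta))).
      by apply: (box1 (t := [::])) M; [taut | wfs].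
    have DI := DImp (tB B) (sent_Dm _ _) Sl' M2.
    by apply: (box2 (t := [::])) H4 DI; [taut | wfs].
  + case/subsetPn: HBB => a HaB HaB'.
    have WL1 : forall (C : {set A}), wf (bigAnd [seq fDia x a0 chi | a0 <- enum C]).
      by move=> C; rewrite wf_bigAnd all_map; apply/allP => b _ /=; rewrite Wc.
    have WL2 : forall (C : {set A}), wf (bigAnd [seq fAsg x b (fNeg chi) | b <- enum C]).
      by move=> C; rewrite wf_bigAnd all_map; apply/allP => b _ /=; rewrite Wc.
    have WL1B := WL1 B; have WL2B := WL2 (~: B); have WL1B' := WL1 B'; have WL2B' := WL2 (~: B').
    have B1 : LEL (fImp (bangL x chi B) (fDia x a chi)).
      have HaE : a \in enum B by rewrite mem_enum.
      have H := bigAnd_elim (map_inL (fun a0 => fDia x a0 chi) HaE) WL1B.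
      by rewrite /bangL -lock /bang; apply: (box1 (t := [::])) H; [taut | wfs].
    have B2 : LEL (fImp (bangL x chi B') (fAsg x a (fNeg chi))).
      have HaE : a \in enum (~: B') by rewrite mem_enum inE HaB'.
      have H := bigAnd_elim (map_inL (fun b => fAsg x b (fNeg chi)) HaE) WL2B'.
      by rewrite /bangL -lock /bang; apply: (box1 (t := [::])) H; [taut | wfs].
    have HaU : a \in unzip2 (tB B) by rewrite U2 memB.
    have C' := ChiConv Hc (Ut B) HaU.
    have Sd := Sdia a.
    have T : LEL (fImp (fDia x a chi) (fImp (bangL x chi B') (Dm (tB B') beta))).
      by apply: (box1 (t := [::])) B2; [taut | wfs].
    have DI := DImp (tB B) Sd Sl' T.
    by apply: (box3 (t := [::])) B1 C' DI; [taut | wfs].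
have WKI' := WKI _ SKb WKb.
have SKI' := SKI _ SKb.
have WDK : wf (Dm (tB B) (KI beta)) by rewrite /Dm wf_pre /= SKb WKb.
have WB := Wbang B.
have WDB := WDb B.
by apply: (box2 (t := [::])) E1 K1; [taut | wfs].
Qed.

End Proof.

Unset Implicit Arguments.

Theorem proposition7 (A : finType) (P : countType) (a0 : A)
    (lst : {set A} -> seq A) (vars : {set A} -> seq nat)
    (Hlst : forall B : {set A}, uniq (lst B) /\ [set a in lst B] = B)
    (Hvars : forall B : {set A}, uniq (vars B) /\ size (vars B) = size (lst B))
    (x : nat) (chi beta : form A P) :
  chi_form x chi -> sentence beta -> wf beta ->
  LEL (fImp (Kint lst vars x chi beta)
            (Kint lst vars x chi (Kint lst vars x chi beta))).
Proof. exact: main. Qed.
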